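(* Let $\mathcal{H}$ be a finite-dimensional complex Hilbert space and let $L(\mathcal{H})$ be the space of linear operators on $\mathcal{H}$ with the Hilbert–Schmidt inner product. Let $U$ be a unitary operator on $\mathcal{H}$ and $A_1,\dots,A_n$ operators on $\mathcal{H}$ forming unital measurements, i.e. $\sum_jA_j^*A_j=I$ and $\sum_jA_jA_j^*=I$. Define linear maps on $L(\mathcal{H})$ by $C(\rho)=U\rho U^*$, $D(\rho)=\sum_{j=1}^nA_j\rho A_j^*$, and $\mathcal{L}(\rho)=qC(\rho)+pD(\rho)$ with $0<p,q<1$, $p+q=1$. If $\lambda=1$ is the only eigenvalue of $D$ with $|\lambda|=1$, then $\lambda=1$ is the only eigenvalue of $\mathcal{L}$ with $|\lambda|=1$. Moreover, if $1$ is an eigenvalue of $D$ of algebraic multiplicity $1$, then $1$ is an eigenvalue of $\mathcal{L}$ of algebraic multiplicity $1$. *)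

(* Defs.v *)
From HB Require Import structures.
From mathcomp Require Import all_boot all_order all_algebra.
Set Implicit Arguments. Unset Strict Implicit. Unset Printing Implicit Defensive.
Import Order.TTheory GRing.Theory Num.Theory.
Local Open Scope ring_scope.

(* H = C^N, L(H) = 'M[C]_N.  C is an arbitrary numClosedFieldType
   (complex numbers with conjugation Num.conj and modulus `|.|). *)

Definition adj (C : numClosedFieldType) (N : nat) (A : 'M[C]_N) : 'M[C]_N :=
  (map_mx Num.conj A)^T.

Definition Cmap (C : numClosedFieldType) (N : nat) (U : 'M[C]_N)
  (rho : 'M[C]_N) : 'M[C]_N := U *m rho *m adj U.

Definition Dmap (C : numClosedFieldType) (N n : nat) (A : 'I_n -> 'M[C]_N)
  (rho : 'M[C]_N) : 'M[C]_N := \sum_(j < n) A j *m rho *m adj (A j).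

Definition Lmap (C : numClosedFieldType) (N n : nat) (U : 'M[C]_N)
  (A : 'I_n -> 'M[C]_N) (p q : C) (rho : 'M[C]_N) : 'M[C]_N :=
  q *: Cmap U rho + p *: Dmap A rho.

Definition is_eigenvalue (C : numClosedFieldType) (N : nat)
  (Phi : 'M[C]_N -> 'M[C]_N) (l : C) : Prop :=
  exists2 X : 'M[C]_N, X != 0 & Phi X = l *: X.

(* algebraic multiplicity of l as an eigenvalue of the linear map Phi:
   multiplicity of l as a root of the characteristic polynomial of the
   matrix of Phi (w.r.t. the standard basis of 'M_N, via mxvec). *)
Definition alg_mult (C : numClosedFieldType) (N : nat)
  (Phi : 'M[C]_N -> 'M[C]_N) (l : C) : nat :=
  mup l (char_poly (lin_mx Phi)).

(* Main.v *)
Require Import Defs.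
From HB Require Import structures.
From mathcomp Require Import all_boot all_order all_algebra.
From mathcomp Require Import ring.
Import Order.TTheory GRing.Theory Num.Theory.
Local Open Scope ring_scope.

Module Helpers.
Set Implicit Arguments. Unset Strict Implicit. Unset Printing Implicit Defensive.

Lemma det_rank1 (R : comNzRingType) n (u : 'cV[R]_n) (v : 'rV[R]_n) :
  \det (1%:M + u *m v) = 1 + (v *m u) 0 0.
Proof.
pose B := block_mx (1%:M : 'M[R]_1) v (- u) (1%:M : 'M_n).
have h1 : block_mx 1%:M 0 (- u) 1%:M *m block_mx 1%:M v 0 (1%:M + u *m v) = B.
  rewrite mulmx_block ?mul1mx ?mul0mx ?mulmx0 ?addr0 ?add0r ?mulmx1.
  by rewrite mulNmx addrC addrK.
have h2 : block_mx (1%:M + v *m u) v 0 1%:M *m block_mx 1%:M 0 (- u) 1%:M = B.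
  rewrite mulmx_block ?mul1mx ?mul0mx ?mulmx0 ?addr0 ?add0r ?mulmx1 mulmxN.
  by rewrite addrK.
have := congr1 determinant h1; rewrite -h2 !det_mulmx det_lblock det_ublock.
rewrite det_ublock !det1 !mul1r !mulr1 det_mx11 => ->.
by rewrite !mxE.
Qed.

Lemma key_id (S : comNzRingType) n (M E : 'M[S]_n) (x : S) :
  E *m E = E -> M *m E = E -> E *m M = E ->
  (1%:M + (x - 2%:R) *: E) *m (E + (x%:M - M) *m (1%:M - E)) = x%:M - M.
Proof.
move=> EE ME EM.
have h1 : (x%:M - M) *m (1%:M - E) = x%:M - x *: E - M + E.
  rewrite mulmxBr mulmx1 !mulmxBl mul_scalar_mx ME.
  by apply/matrixP => i j; rewrite !mxE; ring.
rewrite h1 !mulmxDl ?mulmxDr ?mulmxBr ?mul1mx -?scalemxAl ?mulmxDr ?mulmxBr.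
rewrite !mulmxN mul_mx_scalar -!scalemxAr EE EM.
apply/matrixP => i j; rewrite !mxE; ring.
Qed.

Section Split.
Variable K : fieldType.

Definition Gmx n (M : 'M[K]_n) (u : 'cV_n) (v : 'rV_n) : 'M[{poly K}]_n :=
  map_mx polyC (u *m v) + char_poly_mx M *m (1%:M - map_mx polyC (u *m v)).

Definition Kmx n (M : 'M[K]_n) (u : 'cV_n) (v : 'rV_n) : 'M[K]_n :=
  u *m v + (1%:M - M) *m (1%:M - u *m v).

Lemma char_poly_split n (M : 'M[K]_n) (u : 'cV_n) (v : 'rV_n) :
  v *m u = 1%:M -> M *m u = u -> v *m M = v ->
  char_poly M = ('X - 1) * \det (Gmx M u v).
Proof.
move=> vu Mu vM.
pose up := map_mx (@polyC K) u; pose vp := map_mx (@polyC K) v.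
pose Mp := map_mx (@polyC K) M.
have vup : vp *m up = 1%:M by rewrite -map_mxM vu map_scalar_mx.
have Mup : Mp *m up = up by rewrite -map_mxM Mu.
have vMp : vp *m Mp = vp by rewrite -map_mxM vM.
have Ep : map_mx polyC (u *m v) = up *m vp by rewrite map_mxM.
rewrite /Gmx Ep /char_poly.
have -> : char_poly_mx M = 'X%:M - Mp by [].
rewrite -{1}(@key_id _ _ Mp (up *m vp) (polyX K)); last first.
- by rewrite -mulmxA vMp.
- by rewrite mulmxA Mup.
- by rewrite mulmxA -(mulmxA up) vup mulmx1.
rewrite det_mulmx scalemxAl det_rank1 -scalemxAr mxE vup mxE eqxx mulr1.
congr (_ * _); rewrite addrC -addrA; congr (_ + _).
ring.
Qed.

Lemma Gmx_eval n (M : 'M[K]_n) (u : 'cV_n) (v : 'rV_n) :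
  (\det (Gmx M u v)).[1] = \det (Kmx M u v).
Proof.
rewrite -[_.[1]]/(horner_eval 1 _) -det_map_mx /Gmx /Kmx.
have hv := horner_eval (1 : K).
rewrite (map_mxD (horner_eval 1)) !(map_mxM (horner_eval 1)) (map_mxB (horner_eval 1)).
rewrite (map_scalar_mx (horner_eval 1)) rmorph1 /char_poly_mx.
congr (\det _); congr (_ + _); last congr (mulmx _ _);
  apply/matrixP => i j; rewrite !mxE;
  rewrite ?(_ : forall p : {poly K}, (horner_eval 1 : {rmorphism _ -> _}) p = p.[1]) //
   ?hornerE //.
- exact: hornerC.
- by congr (_ - _); exact: hornerC.
- by congr (_ - _); case: (i == j); rewrite ?hornerE.
Qed.

Lemma Kmx_ker n (M : 'M[K]_n) (u : 'cV_n) (v : 'rV_n) (w : 'rV_n) :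
  v *m u = 1%:M -> M *m u = u ->
  (w *m Kmx M u v = 0) <-> (w *m u = 0 /\ w *m M = w).
Proof.
move=> vu Mu; rewrite /Kmx.
have Eu : u *m v *m u = u by rewrite -mulmxA vu mulmx1.
have ME : (1%:M - M) *m (u *m v) = 0 by rewrite mulmxBl mul1mx mulmxA Mu subrr.
split.
- move=> h.
  have wu : w *m u = 0.
    have Ku : (u *m v + (1%:M - M) *m (1%:M - u *m v)) *m u = u.
      by rewrite (mulmxDl (u *m v)) Eu -mulmxA (mulmxBl 1%:M (u *m v)) mul1mx Eu subrr mulmx0 addr0.
    by have := congr1 (mulmx^~ u) h; rewrite /= -mulmxA Ku mul0mx.
  split=> //.
  move: h; rewrite mulmxDr (mulmxA w u v) wu mul0mx add0r mulmxA.
  rewrite (mulmxBr (w *m (1%:M - M))) mulmx1.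
  rewrite -(mulmxA w) ME mulmx0 subr0 mulmxBr mulmx1 => /eqP.
  by rewrite subr_eq0 => /eqP.
- case=> wu wM; rewrite mulmxDr (mulmxA w u v) wu mul0mx add0r mulmxA.
  by rewrite (mulmxBr w) mulmx1 wM subrr mul0mx.
Qed.

Lemma mup_char_iff n (M : 'M[K]_n) (u : 'cV_n) (v : 'rV_n) :
  v *m u = 1%:M -> M *m u = u -> v *m M = v ->
  (mup 1 (char_poly M) == 1%N) = (\det (Kmx M u v) != 0).
Proof.
move=> vu Mu vM.
have cp0 : char_poly M != 0 by apply: monic_neq0; apply: char_poly_monic.
have hs := char_poly_split vu Mu vM.
have q0 : \det (Gmx M u v) != 0.
  by apply: contraNneq cp0; rewrite hs => ->; rewrite mulr0.
have X0 : ('X - 1 : {poly K}) != 0 by rewrite -polyC1 polyXsubC_eq0.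
rewrite hs mupM // -polyC1 -(expr1 ('X - 1%:P)) mup_XsubCX eqxx.
rewrite -Gmx_eval -[_ != 0]/(~~ root _ 1) eqSS.
apply/eqP/idP => [m0|nr]; last by rewrite mupNroot.
apply/negP => r.
have : (0 < mup 1 (\det (Gmx M u v)))%N by rewrite -XsubC_dvd // dvdp_XsubCl.
by rewrite m0.
Qed.

End Split.

Section HS.
Variable C : numClosedFieldType.
Variable N : nat.
Implicit Types X Y Z : 'M[C]_N.

Lemma adjM m n p (A : 'M[C]_(m, n)) (B : 'M[C]_(n, p)) :
  (map_mx Num.conj (A *m B))^T = (map_mx Num.conj B)^T *m (map_mx Num.conj A)^T.
Proof. by rewrite map_mxM trmx_mul. Qed.

Lemma adjMmx X Y : adj (X *m Y) = adj Y *m adj X.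
Proof. exact: adjM. Qed.

Lemma adjK X : adj (adj X) = X.
Proof. by apply/matrixP => i j; rewrite !mxE conjCK. Qed.

Lemma adjD X Y : adj (X + Y) = adj X + adj Y.
Proof. by apply/matrixP => i j; rewrite !mxE rmorphD. Qed.

Lemma adjN X : adj (- X) = - adj X.
Proof. by apply/matrixP => i j; rewrite !mxE rmorphN. Qed.

Lemma adjB X Y : adj (X - Y) = adj X - adj Y.
Proof. by rewrite adjD adjN. Qed.

Lemma adjZ a X : adj (a *: X) = a^* *: adj X.
Proof. by apply/matrixP => i j; rewrite !mxE rmorphM. Qed.

Lemma tr_adj X : \tr (adj X) = (\tr X)^*.
Proof. by rewrite /mxtrace rmorph_sum; apply: eq_bigr => i _; rewrite !mxE. Qed.

Definition hs X Y := \tr (adj X *m Y).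

Lemma hs_conj X Y : hs Y X = (hs X Y)^*.
Proof. by rewrite /hs -tr_adj adjMmx adjK. Qed.

Lemma hsDr X Y Z : hs X (Y + Z) = hs X Y + hs X Z.
Proof. by rewrite /hs mulmxDr mxtraceD. Qed.

Lemma hsDl X Y Z : hs (X + Y) Z = hs X Z + hs Y Z.
Proof. by rewrite /hs adjD mulmxDl mxtraceD. Qed.

Lemma hsNr X Y : hs X (- Y) = - hs X Y.
Proof. by rewrite /hs mulmxN linearN. Qed.

Lemma hsNl X Y : hs (- X) Y = - hs X Y.
Proof. by rewrite /hs adjN mulNmx linearN. Qed.

Lemma hsZr a X Y : hs X (a *: Y) = a * hs X Y.
Proof. by rewrite /hs -scalemxAr mxtraceZ. Qed.

Lemma hsZl a X Y : hs (a *: X) Y = a^* * hs X Y.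
Proof. by rewrite /hs adjZ -scalemxAl mxtraceZ. Qed.

Lemma hs_ge0 X : 0 <= hs X X.
Proof.
rewrite /hs /mxtrace; apply: sumr_ge0 => i _; rewrite mxE.
apply: sumr_ge0 => j _; rewrite !mxE -normCKC; exact: exprn_ge0.
Qed.

Lemma hs_eq0 X : hs X X = 0 -> X = 0.
Proof.
rewrite /hs /mxtrace => /eqP; rewrite psumr_eq0 => [/allP h|i _]; last first.
  rewrite mxE; apply: sumr_ge0 => j _; rewrite !mxE -normCKC; exact: exprn_ge0.
apply/matrixP => j i; rewrite mxE.
have := h i (mem_index_enum _); rewrite mxE psumr_eq0 => [/allP h2|k _]; last first.
  by rewrite !mxE -normCKC; exact: exprn_ge0.
have := h2 j (mem_index_enum _); rewrite !mxE -normCKC.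
by rewrite expf_eq0 /= normr_eq0 => /eqP.
Qed.

Lemma hs_real X : (hs X X)^* = hs X X.
Proof. by apply/eqP; rewrite -CrealE; apply: ger0_real; apply: hs_ge0. Qed.

Lemma hs_sub X Y : hs (X - Y) (X - Y) = hs X X - (hs X Y + hs Y X) + hs Y Y.
Proof. rewrite !(hsDl, hsDr, hsNl, hsNr); ring. Qed.

Lemma hs_cross X Y : hs X Y + hs Y X <= hs X X + hs Y Y.
Proof.
have := hs_ge0 (X - Y); rewrite hs_sub.
by rewrite addrAC subr_ge0.
Qed.



Lemma hs_C U X : adj U *m U = 1%:M -> hs (Cmap U X) (Cmap U X) = hs X X.
Proof.
move=> UU; rewrite /hs /Cmap !adjMmx adjK.
rewrite !mulmxA mxtrace_mulC !mulmxA UU mul1mx -(mulmxA (adj X)) UU mulmx1.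
done.
Qed.

Lemma hs_D_split n (A : 'I_n -> 'M[C]_N) X Y :
  hs Y (Dmap A X) = \sum_(j < n) hs (Y *m A j) (A j *m X).
Proof.
rewrite /hs /Dmap mulmx_sumr raddf_sum /=; apply eq_bigr => j _.
by rewrite adjMmx !mulmxA mxtrace_mulC !mulmxA.
Qed.

Lemma hs_sumL n (A : 'I_n -> 'M[C]_N) X :
  \sum_(j < n) adj (A j) *m A j = 1%:M ->
  \sum_(j < n) hs (A j *m X) (A j *m X) = hs X X.
Proof.
move=> h; rewrite /hs -(mulmx1 (adj X)) -h mulmx_sumr mulmx_suml raddf_sum /=.
by apply: eq_bigr => j _; rewrite adjMmx !mulmxA.
Qed.

Lemma hs_sumR n (A : 'I_n -> 'M[C]_N) Y :
  \sum_(j < n) A j *m adj (A j) = 1%:M ->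
  \sum_(j < n) hs (Y *m A j) (Y *m A j) = hs Y Y.
Proof.
move=> h; rewrite /hs -(mulmx1 (adj Y *m Y)) -h mulmx_sumr raddf_sum /=.
apply: eq_bigr => j _; rewrite adjMmx -!mulmxA mxtrace_mulC -!mulmxA.
by rewrite mxtrace_mulC !mulmxA.
Qed.

Lemma hs_D_contr n (A : 'I_n -> 'M[C]_N) X :
  \sum_(j < n) adj (A j) *m A j = 1%:M ->
  \sum_(j < n) A j *m adj (A j) = 1%:M ->
  hs (Dmap A X) (Dmap A X) <= hs X X.
Proof.
move=> h1 h2; set Y := Dmap A X.
have e1 : hs Y Y = \sum_(j < n) hs (Y *m A j) (A j *m X) := hs_D_split A X Y.
have e2 : hs Y Y = \sum_(j < n) hs (A j *m X) (Y *m A j).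
  rewrite -hs_real {1}/Y hs_D_split rmorph_sum; apply: eq_bigr => j _.
  by rewrite [RHS]hs_conj.
have : hs Y Y + hs Y Y <= hs Y Y + hs X X.
  rewrite {1}e1 {1}e2 -big_split /= -(hs_sumL X h1) -(hs_sumR Y h2) addrC.
  rewrite -big_split /=; apply: ler_sum => j _; rewrite addrC; exact: hs_cross.
by rewrite lerD2l.
Qed.

Lemma real_conj (a : C) : 0 < a -> a^* = a.
Proof. by move=> a0; apply/eqP; rewrite -CrealE; apply: gtr0_real. Qed.

Lemma L_eig_D n (U : 'M[C]_N) (A : 'I_n -> 'M[C]_N) (p q l : C) X :
  adj U *m U = 1%:M ->
  \sum_(j < n) adj (A j) *m A j = 1%:M ->
  \sum_(j < n) A j *m adj (A j) = 1%:M ->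
  0 < p -> 0 < q -> p + q = 1 ->
  Lmap U A p q X = l *: X -> `|l| = 1 -> Dmap A X = l *: X.
Proof.
move=> UU h1 h2 p0 q0 pq LX l1.
set s := hs X X.
have hl : hs (l *: X) (l *: X) = s.
  rewrite hsZl hsZr mulrA -normCKC l1 expr1n mul1r //.
set a := hs (l *: X) (Cmap U X); set b := hs (l *: X) (Dmap A X).
have e1 : q * a + p * b = s.
  by rewrite -hl -{2}LX /Lmap hsDr !hsZr.
have e2 : q * a^* + p * b^* = s.
  rewrite -[q](real_conj q0) -[p](real_conj p0) -!rmorphM -rmorphD e1.
  exact: hs_real.
have ha : a + a^* <= s + s.
  rewrite /a -hs_conj; have := hs_cross (l *: X) (Cmap U X).
  by rewrite hl hs_C.
have hb : b + b^* <= s + s.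
  rewrite /b -hs_conj; apply: le_trans (hs_cross (l *: X) (Dmap A X)) _.
  by rewrite hl lerD2l hs_D_contr.
have hb2 : s + s <= b + b^*.
  have e3 : q * (a + a^*) + p * (b + b^*) = s + s.
    by rewrite -{1}e1 -e2; ring.
  have : q * (a + a^*) <= q * (s + s) by rewrite ler_wpM2l // ltW.
  rewrite -(lerD2r (p * (b + b^*))) e3 => h.
  have : p * (s + s) + q * (s + s) <= p * (b + b^*) + q * (s + s).
    by rewrite -mulrDl pq mul1r [X in _ <= X]addrC.
  by rewrite (lerD2r (q * (s + s))) ler_pM2l.
have h0 : hs (Dmap A X - l *: X) (Dmap A X - l *: X) <= 0.
  rewrite hs_sub hl -/b.
  have -> : hs (Dmap A X) (l *: X) = b^* by rewrite /b -hs_conj.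
  have hD := hs_D_contr X h1 h2.
  apply: (@le_trans _ _ (s - (s + s) + s)); last by rewrite (_ : s - (s + s) + s = 0) //; ring.
  by rewrite lerD2r lerB // [b^* + b]addrC.
apply/subr0_eq/hs_eq0/eqP; by rewrite eq_le h0 hs_ge0.
Qed.
End HS.

Lemma mul_vec_lin' (R : comNzRingType) m n (f : 'M[R]_(m, n) -> 'M[R]_(m, n)) :
  linear f -> forall X, mxvec X *m lin_mx f = mxvec (f X).
Proof.
move=> lf X.
pose fl : {linear 'M[R]_(m, n) -> 'M[R]_(m, n)} :=
  HB.pack f (GRing.isLinear.Build _ _ _ _ f lf).
exact: (mul_vec_lin fl).
Qed.

Lemma trace_vec (R : comNzRingType) N (X : 'M[R]_N) :
  mxvec X *m (mxvec (1%:M : 'M[R]_N))^T = (\tr X)%:M.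
Proof.
apply/matrixP => i j; rewrite !ord1 !mxE /mxtrace.
rewrite (reindex _ (curry_mxvec_bij _ _)) /= mulr1n.
have -> : \sum_i X i i = \sum_i \sum_j X i j * (1%:M : 'M[R]_N) i j.
  apply: eq_bigr => a _.
  rewrite (bigD1 a) //= big1 ?addr0 => [|b nba]; first by rewrite !mxE eqxx mulr1.
  by rewrite !mxE eq_sym (negbTE nba) mulr0.
rewrite pair_bigA; apply: eq_bigr => [[a b]] _.
by rewrite /= mxE !mxvecE.
Qed.

Lemma simple_iff (C : numClosedFieldType) N (f : 'M[C]_N -> 'M[C]_N) :
  linear f -> (0 < N)%N -> f 1%:M = 1%:M -> (forall X, \tr (f X) = \tr X) ->
  (mup 1 (char_poly (lin_mx f)) = 1%N) <->
  (forall X, f X = X -> \tr X = 0 -> X = 0).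
Proof.
move=> lf N0 f1 ftr.
set M := lin_mx f; set u := (mxvec (1%:M : 'M[C]_N))^T.
set v := (N%:R : C)^-1 *: mxvec (1%:M : 'M[C]_N).
have fv := mul_vec_lin' lf.
have N0' : (N%:R : C) != 0 by rewrite pnatr_eq0 -lt0n.
have vu : v *m u = 1%:M.
  by rewrite -scalemxAl trace_vec mxtrace1 scale_scalar_mx mulVf.
have Mu : M *m u = u.
  apply/row_matrixP => i; rewrite !rowE mulmxA -(vec_mxK 'e_i) fv !trace_vec.
  by rewrite ftr.
have vM : v *m M = v by rewrite -scalemxAl fv f1.
have h := mup_char_iff vu Mu vM.
split.
- move=> m1 X fX trX.
  have dK : \det (Kmx M u v) != 0 by rewrite -h m1.
  apply/eqP; rewrite -mxvec_eq0; apply: contraNT dK => nz; apply/det0P.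
  exists (mxvec X) => //.
  apply/(Kmx_ker _ vu Mu); split; first by rewrite trace_vec trX raddf0.
  by rewrite fv fX.
- move=> H; apply/eqP; rewrite h; apply/negP => /det0P [w wn0].
  move/(Kmx_ker _ vu Mu) => [wu wM].
  have := H (vec_mx w); rewrite -(vec_mxK w) in wu wM.
  rewrite fv in wM; move/(can_inj mxvecK): wM => wM.
  have tr0 : \tr (vec_mx w) = 0.
    by move/matrixP: wu => /(_ 0 0); rewrite trace_vec !mxE eqxx mulr1n.
  move=> /(_ wM tr0) w0; move: wn0; by rewrite -(vec_mxK w) w0 linear0 eqxx.
Qed.

Section Maps.
Variables (C : numClosedFieldType) (N n : nat) (U : 'M[C]_N)
  (A : 'I_n -> 'M[C]_N) (p q : C).

Lemma Cmap_lin : linear (Cmap U).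
Proof.
by move=> a X Y; rewrite /Cmap mulmxDr mulmxDl -scalemxAr -scalemxAl.
Qed.

Lemma Dmap_lin : linear (Dmap A).
Proof.
move=> a X Y; rewrite /Dmap scaler_sumr -big_split /=; apply: eq_bigr => j _.
by rewrite mulmxDr mulmxDl -scalemxAr -scalemxAl.
Qed.

Lemma Lmap_lin : linear (Lmap U A p q).
Proof.
move=> a X Y; rewrite /Lmap Cmap_lin Dmap_lin !scalerDr !scalerA.
by rewrite (mulrC q) (mulrC p) -!scalerA addrACA -scalerDr.
Qed.

Lemma Cmap_tr X : adj U *m U = 1%:M -> \tr (Cmap U X) = \tr X.
Proof. by move=> UU; rewrite /Cmap mxtrace_mulC mulmxA UU mul1mx. Qed.

Lemma Dmap_tr X : \sum_(j < n) adj (A j) *m A j = 1%:M -> \tr (Dmap A X) = \tr X.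
Proof.
move=> h; rewrite /Dmap raddf_sum /= -{2}(mul1mx X) -h mulmx_suml raddf_sum /=.
by apply eq_bigr => j _; rewrite mxtrace_mulC mulmxA.
Qed.

Lemma Dmap1 : \sum_(j < n) A j *m adj (A j) = 1%:M -> Dmap A 1%:M = 1%:M.
Proof. by move=> h; rewrite /Dmap -[RHS]h; apply eq_bigr => j _; rewrite mulmx1. Qed.

Lemma Cmap1 : U *m adj U = 1%:M -> Cmap U 1%:M = 1%:M.
Proof. by move=> h; rewrite /Cmap mulmx1. Qed.

End Maps.


End Helpers.
Import Helpers.

Theorem mainTheorem5 (C : numClosedFieldType) (N n : nat) (U : 'M[C]_N)
  (A : 'I_n -> 'M[C]_N) (p q : C) :
  U *m adj U = 1%:M -> adj U *m U = 1%:M ->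
  \sum_(j < n) adj (A j) *m A j = 1%:M ->
  \sum_(j < n) A j *m adj (A j) = 1%:M ->
  0 < p < 1 -> 0 < q < 1 -> p + q = 1 ->
  (forall l : C, is_eigenvalue (Dmap A) l -> `|l| = 1 -> l = 1) ->
  (forall l : C, is_eigenvalue (Lmap U A p q) l -> `|l| = 1 -> l = 1) /\
  (is_eigenvalue (Dmap A) 1 -> alg_mult (Dmap A) 1 = 1%N ->
     is_eigenvalue (Lmap U A p q) 1 /\ alg_mult (Lmap U A p q) 1 = 1%N).
Proof.
move=> UU1 UU2 h1 h2 /andP[p0 _] /andP[q0 _] pq HD.
split.
  move=> l [X Xn0 LX] l1; apply: (HD _ _ l1); exists X => //.
  exact: (L_eig_D UU2 h1 h2 p0 q0 pq LX l1).
move=> [X Xn0 _] m1.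
have N0 : (0 < N)%N.
  rewrite lt0n; apply: contraNneq Xn0 => N0; apply/eqP/matrixP => i.
  by have : (i < 0)%N by rewrite -N0 ltn_ord.
have L1 : Lmap U A p q 1%:M = 1%:M.
  by rewrite /Lmap Cmap1 // Dmap1 // -scalerDl addrC pq scale1r.
have Ltr : forall Y, \tr (Lmap U A p q Y) = \tr Y.
  move=> Y; rewrite /Lmap mxtraceD !mxtraceZ Cmap_tr // Dmap_tr //.
  by rewrite -mulrDl addrC pq mul1r.
split.
  exists 1%:M; last by rewrite scale1r.
  apply: contraTneq N0 => h; have := congr1 mxtrace h; rewrite mxtrace1 mxtrace0.
  by move/eqP; rewrite pnatr_eq0 => /eqP ->.
have HDs := (simple_iff (Dmap_lin A) N0 (Dmap1 h2) (fun Y => Dmap_tr Y h1)).1 m1.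
apply/(simple_iff (Lmap_lin U A p q) N0 L1 Ltr) => Y LY trY.
apply: HDs trY; have := L_eig_D UU2 h1 h2 p0 q0 pq (l := 1) (X := Y).
by rewrite scale1r normr1 => /(_ LY erefl).
Qed.
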